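(* Let $F$ be a non-archimedean local field of any characteristic. Then every element of $K=Sp_4(\mathcal{O})$ is a product $k_1k_2k_3\cdots k_{60}$ with $k_{2m-1}\in K_1$ and $k_{2m}\in K_2$ for $1\leq m\leq 30$; that is, $K=(K_1K_2)^{30}$.
   Context: $\mathcal{O}$ is the ring of integers of $F$. $Sp_4$ is defined by $\{g:{}^tgJg=J\}$ with $J$ the $4\times4$ matrix having $J_{14}=J_{23}=1$, $J_{32}=J_{41}=-1$, other entries $0$. With $Q=\begin{pmatrix}0&1\\1&0\end{pmatrix}$, $K_1=\Big\{\begin{pmatrix}A&0\\0&Q\,{}^tA^{-1}Q\end{pmatrix}:A\in GL_2(\mathcal{O})\Big\}$ and $K_2=\Big\{\begin{pmatrix}1&0&0\\0&B&0\\0&0&1\end{pmatrix}:B\in SL_2(\mathcal{O})\Big\}$ (block sizes $1,2,1$), both subgroups of $K$. *)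

(* Defs.v *)
From HB Require Import structures.
From mathcomp Require Import all_boot all_order all_algebra.
Set Implicit Arguments. Unset Strict Implicit. Unset Printing Implicit Defensive.
Import Order.TTheory GRing.Theory Num.Theory.
Local Open Scope ring_scope.

Section LocalField.
Variable F : fieldType.
(* v is a normalized discrete valuation; only its values on nonzero
   elements matter (v 0 is irrelevant). *)
Variable v : F -> int.

Definition inO (x : F) : bool := (x == 0) || (0 <= v x).

(* x and y are congruent modulo the n-th power of the maximal ideal *)
Definition vclose (n : int) (x y : F) : Prop := x = y \/ n <= v (x - y).

Definition nonarch_local_field : Prop :=
  [/\ (forall x y, x != 0 -> y != 0 -> v (x * y) = v x + v y),
      (forall x y, x != 0 -> y != 0 -> x + y != 0 ->
          Num.min (v x) (v y) <= v (x + y)),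
      (forall n : int, exists x, x != 0 /\ v x = n),
      (* finite residue field: finitely many representatives of O/m *)
      (exists s : seq F, all inO s /\
          forall x, inO x -> exists2 r, r \in s & vclose 1 x r) &
      (forall u : nat -> F,
          (forall n : int, exists N, forall p q, (N <= p)%N -> (N <= q)%N ->
              vclose n (u p) (u q)) ->
          exists l, forall n : int, exists N, forall p, (N <= p)%N ->
              vclose n (u p) l)].

Definition intmx m n (A : 'M[F]_(m, n)) : Prop := forall i j, inO (A i j).

Definition Jmx : 'M[F]_4 :=
  \matrix_(i < 4, j < 4)
    if ((i == 0 :> nat) && (j == 3 :> nat)) || ((i == 1 :> nat) && (j == 2 :> nat))
    then 1
    else if ((i == 2 :> nat) && (j == 1 :> nat)) || ((i == 3 :> nat) && (j == 0 :> nat))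
    then -1 else 0.

Definition Qmx : 'M[F]_2 :=
  \matrix_(i < 2, j < 2) if i != j then 1 else 0.

Definition inSp4O (g : 'M[F]_4) : Prop :=
  intmx g /\ g^T *m Jmx *m g = Jmx.

Definition inGL2O (A : 'M[F]_2) : Prop :=
  A \in unitmx /\ intmx A /\ intmx (invmx A).
Definition inSL2O (B : 'M[F]_2) : Prop :=
  intmx B /\ \det B = 1.

Definition inK1 (g : 'M[F]_4) : Prop :=
  exists A : 'M[F]_2, inGL2O A /\
    g = block_mx A 0 0 (Qmx *m (invmx A)^T *m Qmx).

Definition inK2 (g : 'M[F]_4) : Prop :=
  exists B : 'M[F]_2, inSL2O B /\
    g = block_mx (block_mx (1 : 'M[F]_1) 0 0 B : 'M[F]_(1 + 2)) 0 0 (1 : 'M[F]_1).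

End LocalField.

(* Main.v *)
Require Import Defs.
From HB Require Import structures.
From mathcomp Require Import all_boot all_order all_algebra.
From mathcomp Require Import ring zify.
Import Order.TTheory GRing.Theory Num.Theory.
Set Implicit Arguments. Unset Strict Implicit. Unset Printing Implicit Defensive.
Local Open Scope ring_scope.

Section Main.
Variable F : fieldType.
Variable v : F -> int.
Hypothesis HF : nonarch_local_field v.
Lemma vM x y : x != 0 -> y != 0 -> v (x * y) = v x + v y.
Proof. by case: HF => h _ _ _ _; apply: h. Qed.
Lemma vD x y : x != 0 -> y != 0 -> x + y != 0 -> Num.min (v x) (v y) <= v (x + y).
Proof. by case: HF => _ h _ _ _; apply: h. Qed.
Lemma v1 : v 1 = 0.
Proof. have h1 : (1 : F) != 0 by rewrite oner_eq0.
have := vM h1 h1; rewrite mulr1 => H; lia. Qed.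
Lemma vN1 : v (-1) = 0.
Proof. have h : (-1 : F) != 0 by rewrite oppr_eq0 oner_neq0.
have := vM h h; rewrite mulrNN mulr1 v1 => H; lia. Qed.
Definition unitO (x : F) := (x != 0) && (v x == 0).
Definition inm (x : F) := (x == 0) || (0 < v x).
Lemma inO0 : inO v 0. Proof. by apply/orP; left. Qed.
Lemma inO1 : inO v 1. Proof. by rewrite /inO v1 lexx orbT. Qed.
Lemma inOM x y : inO v x -> inO v y -> inO v (x * y).
Proof.
rewrite /inO; case: (eqVneq x 0) => [->|hx]; first by rewrite mul0r eqxx.
case: (eqVneq y 0) => [->|hy]; first by rewrite mulr0 eqxx.
rewrite /= (vM hx hy) => a b; apply/orP; right; lia.
Qed.
Lemma inON x : inO v x -> inO v (- x).
Proof. move=> h; rewrite -mulN1r; apply: inOM => //; by rewrite /inO vN1 lexx orbT. Qed.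
Lemma inOD x y : inO v x -> inO v y -> inO v (x + y).
Proof.
move=> a b; case: (eqVneq x 0) => [->|hx]; first by rewrite add0r.
case: (eqVneq y 0) => [->|hy]; first by rewrite addr0.
case: (eqVneq (x + y) 0) => [->|hxy]; first by apply/orP; left.
move: a b; rewrite /inO (negPf hx) (negPf hy) (negPf hxy) /= => a b.
have := vD hx hy hxy. rewrite /Num.min. case: ifP => _ h; apply: le_trans h => //.
Qed.
Lemma inOB x y : inO v x -> inO v y -> inO v (x - y).
Proof. by move=> a b; apply: inOD => //; apply: inON. Qed.
Lemma unitO_inO x : unitO x -> inO v x.
Proof. by case/andP => _ /eqP h; rewrite /inO h lexx orbT. Qed.
Lemma unitO_inv x : unitO x -> inO v x^-1.
Proof.
case/andP => hx /eqP h. have hi : x^-1 != 0 by rewrite invr_eq0.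
have := vM hx hi; rewrite mulfV // v1 h => H; rewrite /inO; apply/orP; right; lia.
Qed.
Lemma unitO_neq0 x : unitO x -> x != 0. Proof. by case/andP. Qed.
Lemma inm_nunit x : inO v x -> ~~ unitO x -> inm x.
Proof.
rewrite /inO /inm /unitO; case: (eqVneq x 0) => //= _ h1 h2. rewrite lt_def h1 h2. done.
Qed.
Lemma inmD x y : inm x -> inm y -> inm (x + y).
Proof.
move=> a b; case: (eqVneq x 0) => [->|hx]; first by rewrite add0r.
case: (eqVneq y 0) => [->|hy]; first by rewrite addr0.
case: (eqVneq (x + y) 0) => [->|hxy]; first by apply/orP; left.
move: a b; rewrite /inm (negPf hx) (negPf hy) (negPf hxy) /= => a b.
have := vD hx hy hxy. rewrite /Num.min. case: ifP => _ h; apply: lt_le_trans h => //.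
Qed.
Lemma inmM x y : inO v x -> inm y -> inm (x * y).
Proof.
rewrite /inO /inm; case: (eqVneq x 0) => [->|hx]; first by rewrite mul0r eqxx.
case: (eqVneq y 0) => [->|hy]; first by rewrite mulr0 eqxx.
rewrite /= (vM hx hy) => a b; apply/orP; right; lia.
Qed.
Lemma inmN x : inm x -> inm (- x).
Proof. move=> h; rewrite -mulN1r; apply: inmM => //; by rewrite /inO vN1 lexx orbT. Qed.
Lemma not_inm1 : ~~ inm 1.
Proof. by rewrite /inm oner_eq0 v1 ltxx. Qed.
Definition mxn n (f : nat -> nat -> F) : 'M[F]_n := \matrix_(i < n, j < n) f i j.
Definition e n (g : 'M[F]_n.+1) i j := g (inord i) (inord j).
Lemma blk22 (A D : 'M[F]_2) : block_mx A 0 0 D = mxn (2+2) (fun i j =>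
   if (i < 2)%N && (j < 2)%N then e A i j else if (2 <= i)%N && (2 <= j)%N then e D (i-2) (j-2) else 0).
Proof.
apply/matrixP => i j; rewrite -[i](@splitK 2 2) -[j](@splitK 2 2).
case: (@split 2 2 i) => i'; case: (@split 2 2 j) => j'; cbn [unsplit]; rewrite ?block_mxEul ?block_mxEur ?block_mxEdl ?block_mxEdr !mxE /=.
all: case: i' => [[|[|ii]] Hi] //; case: j' => [[|[|jj]] Hj] //=.
all: rewrite /e; congr (_ _ _); apply/val_inj; rewrite /= inordK //.
Qed.
Lemma blk121 (B : 'M[F]_2) : block_mx (block_mx (1 : 'M[F]_1) 0 0 B : 'M_(1 + 2)) 0 0 (1 : 'M[F]_1) = mxn (3+1) (fun i j =>
   if (i == 0)%N && (j == 0)%N then 1 else if (i == 3)%N && (j == 3)%N then 1 else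
   if (0 < i < 3)%N && (0 < j < 3)%N then e B (i-1) (j-1) else 0).
Proof.
apply/matrixP => i j; rewrite -[i](@splitK 3 1) -[j](@splitK 3 1).
case: (@split 3 1 i) => i'; case: (@split 3 1 j) => j'; cbn [unsplit];
rewrite ?block_mxEul ?block_mxEur ?block_mxEdl ?block_mxEdr.
all: try (rewrite -[i'](@splitK 1 2); case: (@split 1 2 i') => i2; cbn [unsplit]).
all: try (rewrite -[j'](@splitK 1 2); case: (@split 1 2 j') => j2; cbn [unsplit]).
all: rewrite ?block_mxEul ?block_mxEur ?block_mxEdl ?block_mxEdr !mxE /=.
all: try (case: i2 => [[|[|ii]] Hi] //=).
all: try (case: j2 => [[|[|jj]] Hj] //=).
all: try (case: i' => [[|ii] Hi] //=).
all: try (case: j' => [[|jj] Hj] //=).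
all: try (rewrite /e; congr (_ _ _); apply/val_inj; rewrite /= inordK //).

Qed.
Arguments e {n} g i j : simpl never.
Lemma mxn_eta n (g : 'M[F]_n.+1) : g = mxn n.+1 (e g).
Proof. apply/matrixP => i j; rewrite !mxE /e; congr (g _ _); apply/val_inj; rewrite /= inordK //. Qed.
Lemma mul4 (f h : nat -> nat -> F) : mxn 4 f * mxn 4 h =
  mxn 4 (fun i j => f i 0%N * h 0%N j + f i 1%N * h 1%N j + f i 2%N * h 2%N j + f i 3%N * h 3%N j).
Proof. apply/matrixP => i j; rewrite !mxE !big_ord_recl big_ord0 !mxE /= addr0 ?addrA //. Qed.
Lemma mul2 (f h : nat -> nat -> F) : mulmx (mxn 2 f) (mxn 2 h) =
  mxn 2 (fun i j => f i 0%N * h 0%N j + f i 1%N * h 1%N j).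
Proof. apply/matrixP => i j; rewrite !mxE !big_ord_recl big_ord0 !mxE /= addr0 ?addrA //. Qed.
Lemma mxn_eq n f h : (forall i j, (i < n)%N -> (j < n)%N -> f i j = h i j) -> mxn n f = mxn n h.
Proof. move=> H; apply/matrixP => i j; rewrite !mxE; exact: H. Qed.
Lemma e_mxn n f i j : (i < n.+1)%N -> (j < n.+1)%N -> e (mxn n.+1 f) i j = f i j.
Proof. by move=> Hi Hj; rewrite /e mxE !inordK. Qed.
Lemma det2 f : \det (mxn 2 f) = f 0%N 0%N * f 1%N 1%N - f 0%N 1%N * f 1%N 0%N.
Proof.
rewrite (expand_det_row _ ord0) !big_ord_recl big_ord0 /cofactor !det_mx11 !mxE /=.
rewrite expr0 expr1 mul1r addr0 mulN1r mulrN. done.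
Qed.
Lemma id_mxn n : (1%:M : 'M[F]_n) = mxn n (fun i j => (i == j)%:R).
Proof. by apply/matrixP => i j; rewrite !mxE. Qed.
Lemma trmx_mxn n f : (mxn n f)^T = mxn n (fun i j => f j i).
Proof. by apply/matrixP => i j; rewrite !mxE. Qed.
Definition Jf (i j : nat) : F :=
    if ((i == 0) && (j == 3)) || ((i == 1) && (j == 2)) then 1
    else if ((i == 2) && (j == 1)) || ((i == 3) && (j == 0)) then -1 else 0.
Lemma Jmx_mxn : Jmx F = mxn 4 Jf.
Proof. by apply/matrixP => i j; rewrite !mxE. Qed.
Lemma Qmx_mxn : Qmx F = mxn 2 (fun i j => if i != j then 1 else 0).
Proof. by apply/matrixP => i j; rewrite !mxE. Qed.
Lemma sympE f : (mxn 4 f)^T *m Jmx F *m mxn 4 f =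
  mxn 4 (fun i j => f 0%N i * f 3%N j + f 1%N i * f 2%N j - f 2%N i * f 1%N j - f 3%N i * f 0%N j).
Proof.
rewrite trmx_mxn Jmx_mxn !mulmxE !mul4; apply: mxn_eq => i j _ _.
rewrite /Jf /=; ring.
Qed.
Definition SpO (g : 'M[F]_4) := inSp4O v g.
Lemma sympl g i j : SpO g -> (i < 4)%N -> (j < 4)%N ->
  e g 0 i * e g 3 j + e g 1 i * e g 2 j - e g 2 i * e g 1 j - e g 3 i * e g 0 j = Jf i j.
Proof.
case=> _ H hi hj; have := congr1 (fun M => e M i j) H.
rewrite (mxn_eta g) sympE Jmx_mxn !e_mxn //.
Qed.
Lemma intE g i j : SpO g -> inO v (e g i j).
Proof. by case=> h _; apply: h. Qed.
Lemma intmx_mul (A B : 'M[F]_4) : intmx v A -> intmx v B -> intmx v (A *m B).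
Proof.
move=> hA hB i j; rewrite mxE; apply: (big_ind (inO v)); [exact: inO0 | exact: inOD | move=> k _; exact: inOM].
Qed.
Lemma Sp_mul A B : SpO A -> SpO B -> SpO (A * B).
Proof.
case=> iA hA [iB hB]; split; first exact: intmx_mul.
have -> : (A * B)^T *m Jmx F *m (A * B) = B^T *m (A^T *m Jmx F *m A) *m B.
  by rewrite -mulmxE trmx_mul !mulmxA.
by rewrite hA hB.
Qed.
Lemma e_mul f g i j : (i < 4)%N -> (j < 4)%N -> e (mxn 4 f * g) i j =
  f i 0%N * e g 0 j + f i 1%N * e g 1 j + f i 2%N * e g 2 j + f i 3%N * e g 3 j.
Proof. by move=> hi hj; rewrite {1}(mxn_eta g) mul4 e_mxn. Qed.
Lemma intmx_mxn n f : (forall i j, (i < n)%N -> (j < n)%N -> inO v (f i j)) -> intmx v (mxn n f).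
Proof. by move=> H i j; rewrite mxE; apply: H. Qed.

Definition mk1f (p q r s : F) (i j : nat) : F :=
  match i, j with
  | 0, 0 => p | 0, 1 => q | 1, 0 => r | 1, 1 => s
  | 2, 2 => (p / (p * s - q * r))%R | 2, 3 => (- q / (p * s - q * r))%R
  | 3, 2 => (- r / (p * s - q * r))%R | 3, 3 => (s / (p * s - q * r))%R
  | _, _ => 0%R end%N.
Definition mk1 p q r s := mxn 4 (mk1f p q r s).
Definition mk2f (p q r s : F) (i j : nat) : F :=
  match i, j with
  | 0, 0 => 1%R | 1, 1 => p | 1, 2 => q | 2, 1 => r | 2, 2 => s | 3, 3 => 1%R
  | _, _ => 0%R end%N.
Definition mk2 p q r s := mxn 4 (mk2f p q r s).

Lemma mk1_K1 p q r s : inO v p -> inO v q -> inO v r -> inO v s -> unitO (p * s - q * r) ->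
  inK1 v (mk1 p q r s).
Proof.
move=> hp hq hr hs hd; have d0 := unitO_neq0 hd; have di := unitO_inv hd.
pose A := mxn 2 (fun i j => match i, j with 0, 0 => p | 0, 1 => q | 1, 0 => r | _, _ => s end%N).
pose Ai := mxn 2 (fun i j => match i, j with 0, 0 => (s / (p * s - q * r))%R | 0, 1 => (- q / (p * s - q * r))%R
   | 1, 0 => (- r / (p * s - q * r))%R | _, _ => (p / (p * s - q * r))%R end%N).
have AAi : A *m Ai = 1%:M.
  rewrite /A /Ai mul2 id_mxn; apply: mxn_eq => [[|[|i]] [|[|j]]] //= _ _; field => //.
have [uA _] := mulmx1_unit AAi.
have invA : invmx A = Ai by rewrite -[invmx A]mulmx1 -AAi mulmxA mulVmx // mul1mx.
exists A; split.
  split => //; split; first by apply: intmx_mxn => [[|[|i]] [|[|j]]].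
  rewrite invA; apply: intmx_mxn => [[|[|i]] [|[|j]]] //= _ _; apply: inOM => //; exact: inON.
rewrite blk22 invA Qmx_mxn trmx_mxn !mul2 /mk1; apply: mxn_eq => i j hi hj.
case: i hi => [|[|[|[|i]]]] // _; case: j hj => [|[|[|[|j]]]] // _; rewrite /= ?e_mxn //=; field => //.
Qed.

Lemma mk2_K2 p q r s : inO v p -> inO v q -> inO v r -> inO v s -> p * s - q * r = 1 ->
  inK2 v (mk2 p q r s).
Proof.
move=> hp hq hr hs hd.
pose B := mxn 2 (fun i j => match i, j with 0, 0 => p | 0, 1 => q | 1, 0 => r | _, _ => s end%N).
exists B; split.
  split; first by apply: intmx_mxn => [[|[|i]] [|[|j]]].
  by rewrite /B det2.
rewrite blk121 /mk2; apply: mxn_eq => i j hi hj.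
case: i hi => [|[|[|[|i]]]] // _; case: j hj => [|[|[|[|j]]]] // _; rewrite /= ?e_mxn //=.
Qed.

Lemma mk1_Sp p q r s : inO v p -> inO v q -> inO v r -> inO v s -> unitO (p * s - q * r) ->
  SpO (mk1 p q r s).
Proof.
move=> hp hq hr hs hd; have d0 := unitO_neq0 hd; have di := unitO_inv hd.
split.
  apply: intmx_mxn => i j hi hj.
  case: i hi => [|[|[|[|i]]]] // _; case: j hj => [|[|[|[|j]]]] // _; rewrite /= ?inO0 //;
   apply: inOM => //; exact: inON.
rewrite /mk1 sympE Jmx_mxn; apply: mxn_eq => i j hi hj.
case: i hi => [|[|[|[|i]]]] // _; case: j hj => [|[|[|[|j]]]] // _; rewrite /Jf /=; field => //.
Qed.

Lemma mk2_Sp p q r s : inO v p -> inO v q -> inO v r -> inO v s -> p * s - q * r = 1 ->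
  SpO (mk2 p q r s).
Proof.
move=> hp hq hr hs hd.
split.
  apply: intmx_mxn => i j hi hj.
  case: i hi => [|[|[|[|i]]]] // _; case: j hj => [|[|[|[|j]]]] // _; rewrite /= ?inO0 ?inO1 //.
have hd' : - (p * s - q * r) = -1 by rewrite hd.
rewrite /mk2 sympE Jmx_mxn; apply: mxn_eq => i j hi hj.
case: i hi => [|[|[|[|i]]]] // _; case: j hj => [|[|[|[|j]]]] // _; rewrite /Jf /=;
  first [ring | (apply: (etrans _ hd); ring) | (apply: (etrans _ hd'); ring)].
Qed.
Ltac solve_ent := rewrite /= ?mul0r ?mulr0 ?mulr1 ?mul1r ?subr0 ?sub0r ?divr1 ?invrN1 //=;
  first [ring | field; rewrite ?mul0r ?mulr0 ?mulr1 ?mul1r ?subr0 ?sub0r ?oppr_eq0 ?oner_eq0 //].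
Ltac mxcases := let i := fresh "i" in let j := fresh "j" in let hi := fresh "hi" in let hj := fresh "hj" in
  apply: mxn_eq => i j hi hj;
  case: i hi => [|[|[|[|i]]]] // _; case: j hj => [|[|[|[|j]]]] // _.

Definition Lf (c : F) (i j : nat) : F := match i, j with 1, 0 => c | 3, 2 => (- c)%R | _, _ => if i == j then 1%R else 0%R end%N.
Definition Uf (c : F) (i j : nat) : F := match i, j with 0, 1 => c | 2, 3 => (- c)%R | _, _ => if i == j then 1%R else 0%R end%N.
Definition Pf (i j : nat) : F := match i, j with 0, 1 => 1%R | 1, 0 => 1%R | 2, 3 => 1%R | 3, 2 => 1%R | _, _ => 0%R end%N.
Definition Xf (t : F) (i j : nat) : F := match i, j with 0, 3 => t | _, _ => if i == j then 1%R else 0%R end%N.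
Definition Zf (b : F) (i j : nat) : F := match i, j with 0, 2 => b | 1, 3 => b | 0, 3 => b | _, _ => if i == j then 1%R else 0%R end%N.
Definition Yf (b : F) (i j : nat) : F := match i, j with 0, 2 => b | 1, 3 => b | _, _ => if i == j then 1%R else 0%R end%N.
Definition Hf (a b c : F) (i j : nat) : F := match i, j with 0, 1 => a | 0, 2 => b | 0, 3 => c | 1, 3 => b | 2, 3 => (- a)%R
   | _, _ => if i == j then 1%R else 0%R end%N.

Lemma Lm_E c : mk1 1 0 c 1 = mxn 4 (Lf c). Proof. rewrite /mk1; mxcases; solve_ent. Qed.
Lemma Um_E c : mk1 1 c 0 1 = mxn 4 (Uf c). Proof. rewrite /mk1; mxcases; solve_ent. Qed.
Lemma Pm_E : mk1 0 1 1 0 = mxn 4 Pf. Proof. rewrite /mk1; mxcases; solve_ent. Qed.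

Lemma unitO1 : unitO 1. Proof. by rewrite /unitO oner_eq0 v1. Qed.
Lemma unitON1 : unitO (-1). Proof. by rewrite /unitO oppr_eq0 oner_eq0 vN1. Qed.
Lemma inON1 : inO v (-1). Proof. exact: inON inO1. Qed.

Lemma L_K1 c : inO v c -> inK1 v (mxn 4 (Lf c)) /\ SpO (mxn 4 (Lf c)).
Proof.
move=> hc; rewrite -Lm_E; have h : unitO (1 * 1 - 0 * c) by rewrite mul1r mul0r subr0 unitO1.
split; [apply: mk1_K1 | apply: mk1_Sp] => //; (exact: inO1 || exact: inO0).
Qed.
Lemma U_K1 c : inO v c -> inK1 v (mxn 4 (Uf c)) /\ SpO (mxn 4 (Uf c)).
Proof.
move=> hc; rewrite -Um_E; have h : unitO (1 * 1 - c * 0) by rewrite mul1r mulr0 subr0 unitO1.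
split; [apply: mk1_K1 | apply: mk1_Sp] => //; (exact: inO1 || exact: inO0).
Qed.
Lemma P_K1 : inK1 v (mxn 4 Pf) /\ SpO (mxn 4 Pf).
Proof.
rewrite -Pm_E; have h : unitO (0 * 0 - 1 * 1) by rewrite mul1r mul0r sub0r unitON1.
split; [apply: mk1_K1 | apply: mk1_Sp] => //; (exact: inO1 || exact: inO0).
Qed.
Lemma mk2_K2Sp p q r s : inO v p -> inO v q -> inO v r -> inO v s -> p * s - q * r = 1 ->
  inK2 v (mk2 p q r s) /\ SpO (mk2 p q r s).
Proof. by move=> *; split; [apply: mk2_K2 | apply: mk2_Sp]. Qed.

Lemma id4 : (1 : 'M[F]_4) = mxn 4 (fun i j => (i == j)%:R). Proof. exact: id_mxn. Qed.
Lemma K1_1 : inK1 v 1.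
Proof. have -> : (1 : 'M[F]_4) = mxn 4 (Lf 0) by rewrite id4; mxcases; solve_ent.
by case: (L_K1 inO0). Qed.
Lemma K2_1 : inK2 v 1.
Proof. have -> : (1 : 'M[F]_4) = mk2 1 0 0 1 by rewrite id4 /mk2; mxcases; solve_ent.
apply: mk2_K2; rewrite ?mulr1 ?mul0r ?subr0 //; (exact: inO1 || exact: inO0). Qed.

Inductive W : nat -> 'M[F]_4 -> Prop :=
| W0 : W 0 1
| WS n h a b : W n h -> inK1 v a -> inK2 v b -> W n.+1 (a * b * h).

Lemma W_mul m n a b : W m a -> W n b -> W (m + n) (a * b).
Proof.
move=> H; elim: H b => [|m' h a0 b0 _ IH ha hb] b Hb; first by rewrite mul1r add0n.
rewrite -!mulrA mulrA addSn; apply: WS => //; exact: IH.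
Qed.
Definition Wl n g := exists2 m, (m <= n)%N & W m g.
Lemma Wl_mul m n p a b : Wl m a -> Wl n b -> (m + n <= p)%N -> Wl p (a * b).
Proof. move=> [m' hm Ha] [n' hn Hb] hp; exists (m' + n')%N; last exact: W_mul.
apply: leq_trans hp; exact: leq_add. Qed.
Lemma Wl_K1 a : inK1 v a -> Wl 1 a.
Proof. move=> ha; exists 1%N => //; have := WS W0 ha K2_1; by rewrite !mulr1. Qed.
Lemma Wl_K2 b : inK2 v b -> Wl 1 b.
Proof. move=> hb; exists 1%N => //; have := WS W0 K1_1 hb; by rewrite !mulr1 mul1r. Qed.
Lemma Wl_1 : Wl 0 1. Proof. by exists 0%N => //; exact: W0. Qed.
Lemma Wl_le m n a : Wl m a -> (m <= n)%N -> Wl n a.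
Proof. move=> [m' h1 h2] h3; exists m' => //; exact: leq_trans h3. Qed.

Lemma step n k k' g : (inK1 v k \/ inK2 v k) -> SpO k' -> k * k' = 1 -> SpO g ->
  (SpO (k' * g) -> Wl n (k' * g)) -> Wl n.+1 g.
Proof.
move=> hk hk' kk hg H.
have -> : g = k * (k' * g) by rewrite mulrA kk mul1r.
apply: (Wl_mul (m := 1)) (H (Sp_mul hk' hg)) _ => //.
by case: hk => h; [exact: Wl_K1 | exact: Wl_K2].
Qed.
Lemma lin_lem (x y E k : F) : E = k -> x - y = E - k -> x = y.
Proof. by move=> -> /eqP; rewrite subrr subr_eq0 => /eqP. Qed.
Lemma lin_lem2 (x y E k : F) : E = k -> x - y = k - E -> x = y.
Proof. by move=> -> /eqP; rewrite subrr subr_eq0 => /eqP. Qed.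
Ltac lin H := first [apply: (lin_lem H); ring | apply: (lin_lem2 H); ring].

Lemma V_K2 t : inO v t -> inK2 v (mk2 1 t 0 1) /\ SpO (mk2 1 t 0 1).
Proof. move=> ht; apply: mk2_K2Sp => //; rewrite ?mulr1 ?mulr0 ?subr0 //; exact: inO1 || exact: inO0. Qed.
Lemma Lt_K2 t : inO v t -> inK2 v (mk2 1 0 t 1) /\ SpO (mk2 1 0 t 1).
Proof. move=> ht; apply: mk2_K2Sp => //; rewrite ?mulr1 ?mul0r ?subr0 //; exact: inO1 || exact: inO0. Qed.

Lemma X_W t : inO v t -> Wl 3 (mxn 4 (Xf t)).
Proof.
move=> ht.
have -> : mxn 4 (Xf t) = mxn 4 Pf * (mk2 1 t 0 1 * mxn 4 Pf) by rewrite /mk2 !mul4; mxcases; solve_ent.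
apply: (Wl_mul (m := 1) (n := 2)) => //; first exact: Wl_K1 (P_K1.1).
apply: (Wl_mul (m := 1) (n := 1)) => //; first exact: Wl_K2 (V_K2 ht).1.
exact: Wl_K1 (P_K1.1).
Qed.
Lemma Z_W b : inO v b -> Wl 4 (mxn 4 (Zf b)).
Proof.
move=> hb; have hnb := inON hb.
have -> : mxn 4 (Zf b) = mxn 4 (Uf 1) * (mk2 1 b 0 1 * (mxn 4 (Uf (-1)) * mk2 1 (-b) 0 1))
  by rewrite /mk2 !mul4; mxcases; solve_ent.
apply: (Wl_mul (m := 1) (n := 3)) => //; first exact: Wl_K1 (U_K1 inO1).1.
apply: (Wl_mul (m := 1) (n := 2)) => //; first exact: Wl_K2 (V_K2 hb).1.
apply: (Wl_mul (m := 1) (n := 1)) => //; first exact: Wl_K1 (U_K1 inON1).1.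
exact: Wl_K2 (V_K2 hnb).1.
Qed.
Lemma Y_W b : inO v b -> Wl 7 (mxn 4 (Yf b)).
Proof.
move=> hb.
have -> : mxn 4 (Yf b) = mxn 4 (Zf b) * mxn 4 (Xf (- b)) by rewrite !mul4; mxcases; solve_ent.
apply: (Wl_mul (m := 4) (n := 3)) => //; [exact: Z_W | exact: X_W (inON hb)].
Qed.
Lemma H_W a b c : inO v a -> inO v b -> inO v c -> Wl 11 (mxn 4 (Hf a b c)).
Proof.
move=> ha hb hc.
have -> : mxn 4 (Hf a b c) = mxn 4 (Xf (c + a * b)) * (mxn 4 (Yf b) * mxn 4 (Uf a))
  by rewrite !mul4; mxcases; solve_ent.
apply: (Wl_mul (m := 3) (n := 8)) => //; first by apply: X_W; apply: inOD => //; exact: inOM.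
apply: (Wl_mul (m := 7) (n := 1)) => //; [exact: Y_W | exact: Wl_K1 (U_K1 ha).1].
Qed.
Lemma st_u u : SpO u -> e u 0 0 = 1 -> e u 1 0 = 0 -> e u 2 0 = 0 -> e u 3 0 = 0 ->
  e u 1 1 = 1 -> e u 1 2 = 0 -> e u 2 1 = 0 -> e u 2 2 = 1 -> Wl 11 u.
Proof.
move=> hu h00 h10 h20 h30 h11 h12 h21 h22.
have r31 : e u 3 1 = 0.
  have := sympl (i:=0) (j:=1) hu isT isT; rewrite h00 h10 h20 h30 h11 /Jf /= => H //; lin H.
have r32 : e u 3 2 = 0.
  have := sympl (i:=0) (j:=2) hu isT isT; rewrite h00 h10 h20 h30 h22 /Jf /= => H //; lin H.
have r33 : e u 3 3 = 1.
  have := sympl (i:=0) (j:=3) hu isT isT; rewrite h00 h10 h20 h30 /Jf /= => H //; lin H.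
have u23 : e u 2 3 = - e u 0 1.
  have := sympl (i:=1) (j:=3) hu isT isT; rewrite h11 h21 r31 r33 /Jf /= => H //; lin H.
have u13 : e u 1 3 = e u 0 2.
  have := sympl (i:=2) (j:=3) hu isT isT; rewrite h12 h22 r32 r33 /Jf /= => H //; lin H.
have -> : u = mxn 4 (Hf (e u 0 1) (e u 0 2) (e u 0 3)).
  rewrite {1}(mxn_eta u); mxcases; rewrite /= ?h00 ?h10 ?h20 ?h30 ?h11 ?h12 ?h21 ?h22 ?r31 ?r32 ?r33 ?u23 ?u13 //.
apply: H_W; exact: intE.
Qed.

Lemma st_e0 g : SpO g -> e g 0 0 = 1 -> e g 1 0 = 0 -> e g 2 0 = 0 -> e g 3 0 = 0 -> Wl 12 g.
Proof.
move=> hg h00 h10 h20 h30.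
have r31 : e g 3 1 = 0.
  have := sympl (i:=0) (j:=1) hg isT isT; rewrite h00 h10 h20 h30 /Jf /= => H //; lin H.
have r32 : e g 3 2 = 0.
  have := sympl (i:=0) (j:=2) hg isT isT; rewrite h00 h10 h20 h30 /Jf /= => H //; lin H.
have hd : e g 1 1 * e g 2 2 - e g 1 2 * e g 2 1 = 1.
  have := sympl (i:=1) (j:=2) hg isT isT; rewrite r31 r32 /Jf /= => H //; lin H.
have ip := intE 1 1 hg; have iq := intE 1 2 hg; have ir := intE 2 1 hg; have is_ := intE 2 2 hg.
apply: (step (k := mk2 (e g 1 1) (e g 1 2) (e g 2 1) (e g 2 2))
             (k' := mk2 (e g 2 2) (- e g 1 2) (- e g 2 1) (e g 1 1))).
- by right; apply: mk2_K2.
- apply: mk2_Sp => //; try exact: inON. lin hd.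
- rewrite /mk2 mul4 id4; mxcases; rewrite /=; first [ring | lin hd].
- exact: hg.
move=> hu; apply: st_u => //; rewrite /mk2 e_mul //= ?h00 ?h10 ?h20 ?h30; first [ring | lin hd].
Qed.

Ltac colc := rewrite ?e_mul //=; first [ring | idtac].

Lemma Pinv : mxn 4 Pf * mxn 4 Pf = 1.
Proof. by rewrite mul4 id4; mxcases; solve_ent. Qed.

Lemma st_e1 g : SpO g -> e g 0 0 = 0 -> e g 1 0 = 1 -> e g 2 0 = 0 -> e g 3 0 = 0 -> Wl 13 g.
Proof.
move=> hg h0 h1 h2 h3.
apply: (step (k := mxn 4 Pf) (k' := mxn 4 Pf)); [left; exact: P_K1.1 | exact: P_K1.2 | exact: Pinv | exact: hg |].
move=> hu; apply: st_e0 => //; rewrite e_mul //= h0 h1 h2 h3; ring.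
Qed.

Lemma st_6 g : SpO g -> e g 0 0 = 0 -> e g 1 0 = 1 -> e g 2 0 = 1 -> e g 3 0 = 0 -> Wl 14 g.
Proof.
move=> hg h0 h1 h2 h3.
apply: (step (k := mk2 1 0 1 1) (k' := mk2 1 0 (-1) 1)).
- by right; apply: (Lt_K2 inO1).1.
- exact: (Lt_K2 inON1).2.
- by rewrite /mk2 mul4 id4; mxcases; solve_ent.
- exact: hg.
move=> hu; apply: st_e1 => //; rewrite /mk2 e_mul //= h0 h1 h2 h3; ring.
Qed.
Lemma st_5 g : SpO g -> e g 0 0 = 0 -> e g 1 0 = 1 -> e g 2 0 = 1 -> Wl 15 g.
Proof.
move=> hg h0 h1 h2; have i3 := intE 3 0 hg.
apply: (step (k := mxn 4 (Lf (- e g 3 0))) (k' := mxn 4 (Lf (e g 3 0)))).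
- by left; apply: (L_K1 (inON i3)).1.
- exact: (L_K1 i3).2.
- by rewrite mul4 id4; mxcases; solve_ent.
- exact: hg.
move=> hu; apply: st_6 => //; rewrite e_mul //= ?h0 ?h1 ?h2; ring.
Qed.
Lemma st_4 g : SpO g -> e g 0 0 = 0 -> e g 1 0 = 1 -> Wl 16 g.
Proof.
move=> hg h0 h1; have i2 := intE 2 0 hg.
have it : inO v (1 - e g 2 0) by apply: inOB => //; exact: inO1.
apply: (step (k := mk2 1 0 (- (1 - e g 2 0)) 1) (k' := mk2 1 0 (1 - e g 2 0) 1)).
- by right; apply: (Lt_K2 (inON it)).1.
- exact: (Lt_K2 it).2.
- by rewrite /mk2 mul4 id4; mxcases; solve_ent.
- exact: hg.
move=> hu; apply: st_5 => //; rewrite /mk2 e_mul //= ?h0 ?h1; ring.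
Qed.
Lemma st_3 g : SpO g -> e g 1 0 = 1 -> Wl 17 g.
Proof.
move=> hg h1; have i0 := intE 0 0 hg.
apply: (step (k := mxn 4 (Uf (e g 0 0))) (k' := mxn 4 (Uf (- e g 0 0)))).
- by left; apply: (U_K1 i0).1.
- exact: (U_K1 (inON i0)).2.
- by rewrite mul4 id4; mxcases; solve_ent.
- exact: hg.
move=> hu; apply: st_4 => //; rewrite e_mul //= ?h1; ring.
Qed.
Lemma st_2 g : SpO g -> unitO (e g 0 0) -> Wl 18 g.
Proof.
move=> hg hu0; have x0 := unitO_neq0 hu0; have i1 := intE 1 0 hg.
have ic : inO v ((1 - e g 1 0) / e g 0 0).
  apply: inOM; [apply: inOB => //; exact: inO1 | exact: unitO_inv].
apply: (step (k := mxn 4 (Lf (- ((1 - e g 1 0) / e g 0 0)))) (k' := mxn 4 (Lf ((1 - e g 1 0) / e g 0 0)))).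
- by left; apply: (L_K1 (inON ic)).1.
- exact: (L_K1 ic).2.
- by rewrite mul4 id4; mxcases; solve_ent.
- exact: hg.
move=> hu; apply: st_3 => //; rewrite e_mul //=; field => //.
Qed.
Lemma st_1b g : SpO g -> unitO (e g 1 0) -> Wl 19 g.
Proof.
move=> hg hu1.
apply: (step (k := mxn 4 Pf) (k' := mxn 4 Pf)); [left; exact: P_K1.1 | exact: P_K1.2 | exact: Pinv | exact: hg |].
move=> hu; apply: st_2 => //.
have -> : e (mxn 4 Pf * g) 0 0 = e g 1 0 by rewrite e_mul //=; ring.
exact: hu1.
Qed.
Lemma st_1c g : SpO g -> unitO (e g 2 0) -> Wl 20 g.
Proof.
move=> hg hu2.
apply: (step (k := mk2 0 (-1) 1 0) (k' := mk2 0 1 (-1) 0)).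
- right; apply: mk2_K2; rewrite ?mulr0 ?mul0r ?mulrN1 ?opprK ?sub0r ?mulr1 ?opprK ?add0r //; (exact: inO0 || exact: inO1 || exact: inON1).
- apply: mk2_Sp; rewrite ?mulr0 ?mul0r ?mulrN1 ?opprK ?sub0r ?mulr1 ?opprK ?add0r //; (exact: inO0 || exact: inO1 || exact: inON1).
- by rewrite /mk2 mul4 id4; mxcases; solve_ent.
- exact: hg.
move=> hu; apply: st_1b => //.
have -> : e (mk2 0 1 (-1) 0 * g) 1 0 = e g 2 0 by rewrite /mk2 e_mul //=; ring.
exact: hu2.
Qed.
Lemma st_1d g : SpO g -> unitO (e g 3 0) -> Wl 21 g.
Proof.
move=> hg hu3.
apply: (step (k := mxn 4 Pf) (k' := mxn 4 Pf)); [left; exact: P_K1.1 | exact: P_K1.2 | exact: Pinv | exact: hg |].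
move=> hu; apply: st_1c => //.
have -> : e (mxn 4 Pf * g) 2 0 = e g 3 0 by rewrite e_mul //=; ring.
exact: hu3.
Qed.

Lemma st_all g : SpO g -> Wl 21 g.
Proof.
move=> hg.
case: (boolP (unitO (e g 0 0))) => [h|n0]; first by apply: Wl_le (st_2 hg h) _.
case: (boolP (unitO (e g 1 0))) => [h|n1]; first by apply: Wl_le (st_1b hg h) _.
case: (boolP (unitO (e g 2 0))) => [h|n2]; first by apply: Wl_le (st_1c hg h) _.
case: (boolP (unitO (e g 3 0))) => [h|n3]; first exact: st_1d hg h.
have m0 := inm_nunit (intE 0 0 hg) n0; have m1 := inm_nunit (intE 1 0 hg) n1.
have m2 := inm_nunit (intE 2 0 hg) n2; have m3 := inm_nunit (intE 3 0 hg) n3.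
have H := sympl (i:=0) (j:=3) hg isT isT; rewrite /Jf /= in H.
have : inm 1.
  rewrite -H; apply: inmD; last by apply: inmN; rewrite mulrC; apply: inmM => //; exact: intE.
  apply: inmD; last by apply: inmN; rewrite mulrC; apply: inmM => //; exact: intE.
  apply: inmD; rewrite mulrC; apply: inmM => //; exact: intE.
by rewrite (negPf not_inm1).
Qed.
Lemma W_one n : W n 1.
Proof. elim: n => [|n IH]; first exact: W0. have := WS IH K1_1 K2_1; by rewrite !mulr1. Qed.

Lemma W_prod n h : W n h -> exists k : 'I_(n.*2) -> 'M[F]_4,
  (forall i : 'I_(n.*2), if odd i then inK2 v (k i) else inK1 v (k i)) /\ h = \prod_(i < n.*2) k i.
Proof.
elim=> [|n0 h0 a b _ [k [hk ->]] ha hb].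
  by exists (fun _ => 1); split; [case | rewrite big_ord0].
exists (fun i : 'I_(n0.*2).+2 => match unlift ord0 i with None => a
   | Some j => match unlift ord0 j with None => b | Some l => k l end end).
split.
  move=> i; case: (unliftP ord0 i) => [j ->|->] //=.
  case: (unliftP ord0 j) => [l ->|->] //=.
  rewrite negbK add0n.

  exact: hk.
rewrite big_ord_recl big_ord_recl unlift_none liftK unlift_none mulrA; congr (_ * _).
by apply: eq_bigr => i _; rewrite !liftK.
Qed.
End Main.

Theorem lemma3p9 (F : fieldType) (v : F -> int) (HF : nonarch_local_field v)
    (g : 'M[F]_4) (Hg : inSp4O v g) :
  exists k : 'I_60 -> 'M[F]_4,
    (forall i : 'I_60, if odd i then inK2 v (k i) else inK1 v (k i)) /\
    g = \prod_(i < 60) k i.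
Proof.
have [m hm Wm] := st_all HF Hg.
have W30 : W v 30 g.
  have hm' : (m <= 30)%N by apply: leq_trans hm _.
  rewrite -(subnKC hm') -[g]mulr1; apply: W_mul => //; exact: W_one.
have [k [hk hg]] := W_prod W30.
by exists k.
Qed.
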